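(* Let $|q|<1$ and let $(\alpha_n,\beta_n)$ be a Bailey pair with respect to $a$, with $|aq|<1$, no denominator vanishing, and all series converging absolutely. Then $$\sum_{n=1}^{\infty} (q;q)_{n-1}(-a)^{n}q^{n(n+1)/2}\beta_n - \sum_{n=1}^{\infty}\frac{(q;q)_{n-1}(-a)^{n}q^{n(n+1)/2}}{(q a ;q)_n}\alpha_n=f_2(a,q),$$ where $f_2(a,q)$ is given by each of the following (equal) expressions: $$f_2(a,q)=-\sum_{n=1}^{\infty} \frac{(1-a q^{2n})q^{n^2} a^{n}}{(1-a q^{n})(1-q^n)}=\sum_{n=1}^{\infty} \frac{q^{n(n+1)/2}(-a)^{n}}{(q a;q)_{n}(1-q^n)}=-\sum_{n=1}^{\infty}\frac{a q^n}{1-aq^n}.$$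
   Context: Notation: $(x;q)_n=(1-x)(1-xq)\cdots(1-xq^{n-1})$, $(x;q)_0=1$. A Bailey pair with respect to $a$ (base $q$) is a pair of sequences $(\alpha_n,\beta_n)_{n\ge0}$ with $\alpha_0=\beta_0=1$ and, for $n>0$, $\beta_n=\sum_{j=0}^{n}\frac{\alpha_j}{(q;q)_{n-j}(aq;q)_{n+j}}$. *)

(* Defs.v *)
From Stdlib Require Import Reals.
Open Scope R_scope.

Record Cx : Type := mkC { Re : R; Im : R }.

Definition Czero : Cx := mkC 0 0.
Definition Cone : Cx := mkC 1 0.
Definition Cadd (z w : Cx) : Cx := mkC (Re z + Re w) (Im z + Im w).
Definition Copp (z : Cx) : Cx := mkC (- Re z) (- Im z).
Definition Csub (z w : Cx) : Cx := Cadd z (Copp w).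
Definition Cmul (z w : Cx) : Cx :=
  mkC (Re z * Re w - Im z * Im w) (Re z * Im w + Im z * Re w).
Definition Cinv (z : Cx) : Cx :=
  mkC (Re z / (Re z * Re z + Im z * Im z)) (- Im z / (Re z * Re z + Im z * Im z)).
Definition Cdiv (z w : Cx) : Cx := Cmul z (Cinv w).
Definition Cnorm (z : Cx) : R := sqrt (Re z * Re z + Im z * Im z).

Fixpoint Cpow (z : Cx) (n : nat) : Cx :=
  match n with O => Cone | S m => Cmul (Cpow z m) z end.

Fixpoint qpoch (x q : Cx) (n : nat) : Cx :=
  match n with
  | O => Cone
  | S m => Cmul (qpoch x q m) (Csub Cone (Cmul x (Cpow q m)))
  end.

Fixpoint Csum_upto (f : nat -> Cx) (n : nat) : Cx :=
  match n with
  | O => f O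
  | S m => Cadd (Csum_upto f m) (f (S m))
  end.

Definition Cseries (f : nat -> Cx) (l : Cx) : Prop :=
  infinite_sum (fun n => Re (f n)) (Re l) /\ infinite_sum (fun n => Im (f n)) (Im l).

Definition Cseries1 (f : nat -> Cx) (l : Cx) : Prop := Cseries (fun n => f (S n)) l.

Definition Cabs_conv1 (f : nat -> Cx) : Prop :=
  exists s : R, infinite_sum (fun n => Cnorm (f (S n))) s.

Definition bailey_pair (a q : Cx) (alpha beta : nat -> Cx) : Prop :=
  alpha O = Cone /\ beta O = Cone /\
  forall n : nat, (0 < n)%nat ->
    beta n = Csum_upto (fun j => Cdiv (alpha j)
                                  (Cmul (qpoch q q (n - j)) (qpoch (Cmul a q) q (n + j)))) n.

(* Main.v *)
Require Import Defs.
From Stdlib Require Import Reals Lra Lia.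
From Coquelicot Require Coquelicot.
Open Scope R_scope.

Module Core.
Import Coquelicot.Coquelicot.
Local Open Scope C_scope.

Fixpoint sm (f : nat -> C) (n : nat) : C :=
  match n with O => 0 | S k => sm f k + f k end.
Fixpoint rsm (f : nat -> R) (n : nat) : R :=
  match n with O => 0%R | S k => (rsm f k + f k)%R end.

Lemma sm_S f n : sm f (S n) = sm f n + f n.
Proof. reflexivity. Qed.
Lemma rsm_S f n : rsm f (S n) = (rsm f n + f n)%R.
Proof. reflexivity. Qed.
Lemma sm_ext f g n : (forall i, (i < n)%nat -> f i = g i) -> sm f n = sm g n.
Proof. induction n; simpl; intros H; auto. rewrite IHn by (intros; apply H; lia). rewrite H by lia. auto. Qed.
Lemma rsm_ext f g n : (forall i, (i < n)%nat -> f i = g i) -> rsm f n = rsm g n.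
Proof. induction n; simpl; intros H; auto. rewrite IHn by (intros; apply H; lia). rewrite H by lia. auto. Qed.
Lemma sm_add f g n : sm (fun i => f i + g i) n = sm f n + sm g n.
Proof. induction n; simpl. ring. rewrite IHn; ring. Qed.
Lemma sm_opp f n : sm (fun i => - f i) n = - sm f n.
Proof. induction n; simpl. ring. rewrite IHn; ring. Qed.
Lemma sm_sub f g n : sm (fun i => f i - g i) n = sm f n - sm g n.
Proof. induction n; simpl. ring. rewrite IHn; ring. Qed.
Lemma sm_scal c f n : sm (fun i => c * f i) n = c * sm f n.
Proof. induction n; simpl. ring. rewrite IHn; ring. Qed.
Lemma sm_split f n k : sm f (n + k) = sm f n + sm (fun i => f (n + i)%nat) k.
Proof. induction k; simpl. rewrite Nat.add_0_r; ring. rewrite Nat.add_succ_r; simpl. rewrite IHk; ring. Qed.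
Lemma sm_shift f n : sm f (S n) = f O + sm (fun i => f (S i)) n.
Proof. induction n; simpl. ring. simpl in IHn. rewrite IHn. ring. Qed.
Lemma sm_zero (f : nat -> C) n : (forall i, (i < n)%nat -> f i = 0) -> sm f n = 0.
Proof. induction n; simpl; intros H; auto. rewrite IHn by (intros; apply H; lia). rewrite H by lia. ring. Qed.
Lemma rsm_split f n k : rsm f (n + k) = (rsm f n + rsm (fun i => f (n + i)%nat) k)%R.
Proof. induction k; simpl. rewrite Nat.add_0_r; ring. rewrite Nat.add_succ_r; simpl. rewrite IHk; ring. Qed.
Lemma rsm_nonneg f n : (forall i, 0 <= f i)%R -> (0 <= rsm f n)%R.
Proof. intros H; induction n; simpl. lra. specialize (H n). lra. Qed.
Lemma rsm_le f g n : (forall i, (i < n)%nat -> f i <= g i)%R -> (rsm f n <= rsm g n)%R.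
Proof. induction n; simpl; intros H. lra. assert (H1 := H n ltac:(lia)). assert (rsm f n <= rsm g n)%R by (apply IHn; intros; apply H; lia). lra. Qed.
Lemma rsm_scal c f n : rsm (fun i => c * f i)%R n = (c * rsm f n)%R.
Proof. induction n; simpl. ring. rewrite IHn; ring. Qed.
Lemma Cmod_sm f n : (Cmod (sm f n) <= rsm (fun i => Cmod (f i)) n)%R.
Proof. induction n; simpl. rewrite Cmod_0; lra. eapply Rle_trans. apply Cmod_triangle. lra. Qed.

Lemma rsm_geom r n : (0 <= r < 1)%R -> (rsm (fun i => r ^ i) n <= / (1 - r))%R.
Proof.
  intros Hr. assert (E : forall n, ((1 - r) * rsm (fun i => r ^ i) n = 1 - r ^ n)%R).
  { induction n0; simpl. ring. rewrite Rmult_plus_distr_l, IHn0. ring. }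
  assert (0 < 1 - r)%R by lra.
  assert (0 <= r ^ n)%R by (apply pow_le; lra).
  apply (Rmult_le_reg_l (1 - r)); auto. rewrite E, Rinv_r by lra. lra.
Qed.

Lemma pow_le1 r k : (0 <= r <= 1)%R -> (r ^ k <= 1)%R.
Proof. intros H; induction k; simpl. lra. assert (0 <= r ^ k)%R by (apply pow_le; lra). nra. Qed.
Lemma pow_le_dec r m n : (0 <= r <= 1)%R -> (m <= n)%nat -> (r ^ n <= r ^ m)%R.
Proof.
  intros Hr H. replace n with (m + (n - m))%nat by lia. rewrite pow_add.
  assert (0 <= r ^ m)%R by (apply pow_le; lra).
  assert (r ^ (n - m) <= 1)%R by (apply pow_le1; lra). nra.
Qed.

Fixpoint qp (q x : C) (n : nat) : C :=
  match n with O => 1 | S k => qp q x k * (1 - x * q ^ k) end.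

Lemma qp_shift q x n : qp q x (S n) = (1 - x) * qp q (x * q) n.
Proof.
  induction n. simpl. ring.
  change (qp q x (S (S n))) with (qp q x (S n) * (1 - x * q ^ (S n))).
  rewrite IHn. simpl. ring.
Qed.

Lemma qp_add q x i m : qp q x (i + m) = qp q x i * qp q (x * q ^ i) m.
Proof.
  induction m. simpl. rewrite Nat.add_0_r; ring.
  rewrite Nat.add_succ_r. simpl. rewrite IHm, Cpow_add_r. ring.
Qed.

Lemma Cmod_1m_le w : (Cmod (1 - w) <= 1 + Cmod w)%R.
Proof. eapply Rle_trans. apply Cmod_triangle. rewrite Cmod_opp, Cmod_1. lra. Qed.
Lemma Cmod_1m_ge w : (1 - Cmod w <= Cmod (1 - w))%R.
Proof.
  assert (H := Cmod_triangle (1 - w) w). replace (1 - w + w) with (RtoC 1) in H by ring.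
  rewrite Cmod_1 in H. lra.
Qed.

Lemma exp_mono x y : (x <= y)%R -> (exp x <= exp y)%R.
Proof. intros [H|H]. left; apply exp_increasing; auto. subst; lra. Qed.

Lemma exp_lower y z t : (0 <= y)%R -> (y <= t)%R -> (y <= z)%R -> (t < 1)%R ->
  (exp (- (z / (1 - t))) <= 1 - y)%R.
Proof.
  intros H1 H2 H3 H4. rewrite exp_Ropp.
  assert (E := exp_ineq1_le (z / (1 - t))).
  assert (0 < 1 - t)%R by lra.
  assert (1 <= (1 - y) * (1 + z / (1 - t)))%R.
  { assert (y * (z / (1 - t)) <= t * (z / (1 - t)))%R.
    { apply Rmult_le_compat_r; [|lra]. apply Rdiv_le_0_compat; lra. }
    assert (t * (z / (1 - t)) = z / (1-t) - z)%R by (field; lra). nra. }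
  assert (0 < exp (z / (1 - t)))%R by apply exp_pos.
  apply (Rmult_le_reg_l (exp (z / (1 - t)))); auto. rewrite Rinv_r by lra. nra.
Qed.

Lemma qp_unif q t : (Cmod q < 1)%R -> (0 <= t < 1)%R ->
  exists B, (1 <= B)%R /\ forall x k, (Cmod x <= t)%R ->
     (Cmod (qp q x k) <= B)%R /\ (1 <= B * Cmod (qp q x k))%R.
Proof.
  intros Hq [Ht Ht1]. set (r := Cmod q).
  assert (Hr1 : (r < 1)%R) by exact Hq.
  assert (Hr : (0 <= r)%R) by apply Cmod_ge_0.
  set (g := fun k => rsm (fun i => r ^ i)%R k).
  assert (Hg : forall k, (0 <= g k <= / (1 - r))%R).
  { intros k; split. apply rsm_nonneg; intros; apply pow_le; lra. apply rsm_geom; lra. }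
  assert (Hp : (0 < / ((1 - t) * (1 - r)))%R) by (apply Rinv_0_lt_compat, Rmult_lt_0_compat; lra).
  assert (Hk : (/ (1 - r) <= / ((1 - t) * (1 - r)))%R).
  { apply Rinv_le_contravar. apply Rmult_lt_0_compat; lra. nra. }
  exists (exp (/ ((1 - t) * (1 - r)))).
  split. rewrite <- exp_0 at 1. apply exp_mono ; lra.
  intros x k Hxt.
  assert (Hx0 : (0 <= Cmod x)%R) by apply Cmod_ge_0.
  assert (Hfac : forall k, (Cmod (x * q ^ k) = Cmod x * r ^ k)%R).
  { intros k0. rewrite Cmod_mult, Cmod_pow. reflexivity. }
  assert (Hup : forall k, (Cmod (qp q x k) <= exp (g k))%R).
  { induction k0. simpl. change (g 0%nat) with 0%R. rewrite Cmod_1, exp_0. lra.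
    change (g (S k0)) with (g k0 + r ^ k0)%R. simpl. rewrite Cmod_mult, exp_plus.
    apply Rmult_le_compat; try apply Cmod_ge_0; auto.
    eapply Rle_trans. apply Cmod_1m_le. rewrite Hfac. eapply Rle_trans; [|apply exp_ineq1_le].
    assert (0 <= r ^ k0)%R by (apply pow_le; lra). nra. }
  assert (Hlo : forall k, (exp (- (g k / (1 - t))) <= Cmod (qp q x k))%R).
  { induction k0. simpl. change (g 0%nat) with 0%R. rewrite Cmod_1.
    replace (0 / (1 - t))%R with 0%R by (field; lra). rewrite Ropp_0, exp_0; lra.
    change (g (S k0)) with (g k0 + r ^ k0)%R. simpl. rewrite Cmod_mult.
    replace (- ((g k0 + r ^ k0) / (1 - t)))%R with
      (- (g k0 / (1 - t)) + - (r ^ k0 / (1 - t)))%R by (field; lra).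
    rewrite exp_plus. apply Rmult_le_compat; try (left; apply exp_pos); auto.
    eapply Rle_trans; [|apply Cmod_1m_ge]. rewrite Hfac.
    assert (0 <= r ^ k0 <= 1)%R by (split; [apply pow_le; lra| apply pow_le1; lra]).
    apply exp_lower; [apply Rmult_le_pos; lra | nra | nra | lra]. }
  split.
  - eapply Rle_trans. apply Hup. apply exp_mono. destruct (Hg k); lra.
  - assert (exp (- (/ ((1 - t) * (1 - r)))) <= Cmod (qp q x k))%R.
    { eapply Rle_trans; [|apply Hlo]. apply exp_mono.
      assert (g k / (1 - t) <= / ((1 - t) * (1 - r)))%R; [|lra].
      rewrite Rinv_mult. unfold Rdiv. rewrite Rmult_comm. apply Rmult_le_compat_l.
      left; apply Rinv_0_lt_compat; lra. destruct (Hg k); lra. }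
    rewrite exp_Ropp in H.
    assert (0 < exp (/ ((1 - t) * (1 - r))))%R by apply exp_pos.
    apply (Rmult_le_compat_l (exp (/ ((1 - t) * (1 - r))))) in H; [|lra].
    rewrite Rinv_r in H by lra. exact H.
Qed.

Lemma qp_nz q x k : (Cmod q < 1)%R -> (Cmod x < 1)%R -> qp q x k <> 0.
Proof.
  intros Hq Hx E. destruct (qp_unif q (Cmod x) Hq (conj (Cmod_ge_0 x) Hx)) as [B [HB H]].
  destruct (H x k (Rle_refl _)) as [_ H2].
  rewrite E, Cmod_0 in H2. lra.
Qed.


Fixpoint tri (n : nat) : nat := match n with O => O | S k => (tri k + S k)%nat end.

Lemma Cmod_qpow_lt q n : (Cmod q < 1)%R -> (0 < n)%nat -> 1 - q ^ n <> 0.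
Proof.
  intros Hq Hn E. assert (H := Cmod_1m_ge (q ^ n)). rewrite E, Cmod_0, Cmod_pow in H.
  assert (Cmod q ^ n <= Cmod q ^ 1)%R by (apply pow_le_dec; [split; [apply Cmod_ge_0|lra]|lia]).
  simpl in H0. lra.
Qed.

Lemma fac_nz q x k : (Cmod q < 1)%R -> (Cmod x < 1)%R -> 1 - x * q ^ k <> 0.
Proof.
  intros Hq Hx E. apply (qp_nz q x (S k) Hq Hx). simpl. rewrite E. ring.
Qed.

Lemma Cmod_mulpow_le x q k : (Cmod q <= 1)%R -> (Cmod (x * q ^ k) <= Cmod x)%R.
Proof.
  intros Hq. rewrite Cmod_mult, Cmod_pow.
  assert (Cmod q ^ k <= 1)%R by (apply pow_le1; split; [apply Cmod_ge_0|lra]).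
  assert (0 <= Cmod x)%R by apply Cmod_ge_0. nra.
Qed.

Definition s2 q x n := (q ^ (tri n) * (- x) ^ n) / (qp q (q * x) n * (1 - q ^ n)).
Definition Hs q x M := sm (fun k => s2 q x (S k)) M.
Definition w2 q x M := (- x) ^ (S M) * q ^ (tri (S M)) / qp q (q * x) (S M).

Lemma Hs_fun q x M : (Cmod q < 1)%R -> (Cmod (q * x) < 1)%R ->
  Hs q x M - Hs q (x * q) M = - (x * q / (1 - x * q)) - w2 q x M.
Proof.
  intros Hq Hx.
  assert (Hx2 : (Cmod (q * (x * q)) < 1)%R).
  { replace (q * (x * q)) with ((q * x) * q ^ 1) by (simpl; ring).
    eapply Rle_lt_trans. apply Cmod_mulpow_le; lra. auto. }
  assert (N1 : forall k, qp q (q * x) k <> 0) by (intros; apply qp_nz; auto).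
  assert (N2 : forall k, qp q (q * (x * q)) k <> 0) by (intros; apply qp_nz; auto).
  assert (N3 : forall k, 1 - q * x * q ^ k <> 0) by (intros; apply fac_nz; auto).
  assert (N4 : 1 - x * q <> 0).
  { intros E. apply (N3 O). simpl. rewrite <- E. ring. }
  assert (N5 : 1 - q * x <> 0) by (replace (q * x) with (x * q) by ring; auto).
  induction M.
  - unfold Hs, w2. simpl. field. cbv beta. auto.
  - unfold Hs in *. simpl. 
    replace (sm (fun k => s2 q x (S k)) M + s2 q x (S M) -
      (sm (fun k => s2 q (x * q) (S k)) M + s2 q (x * q) (S M))) with
      ((sm (fun k => s2 q x (S k)) M - sm (fun k => s2 q (x * q) (S k)) M) +
       (s2 q x (S M) - s2 q (x * q) (S M))) by ring.
    rewrite IHM. set (k := S M).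
    assert (Hk : (0 < k)%nat) by (unfold k; lia).
    assert (E1 : qp q (q * (x * q)) k = qp q (q * x) k * (1 - q * x * q ^ k) / (1 - q * x)).
    { replace (q * (x * q)) with (q * x * q) by ring.
      change (qp q (q * x) k * (1 - q * x * q ^ k)) with (qp q (q * x) (S k)).
      rewrite qp_shift. field. cbv beta; auto. }
    unfold s2, w2. fold k. rewrite E1.
    replace (- (x * q)) with (- x * q) by ring. rewrite Cpow_mult_l.
    change (tri (S k)) with (tri k + S k)%nat. rewrite Cpow_add_r.
    rewrite !Cpow_S. change (qp q (q * x) (S k)) with (qp q (q * x) k * (1 - q * x * q ^ k)).
    field. cbv beta. repeat split; auto. apply Cmod_qpow_lt; auto.
Qed.

Lemma Cmod_shift_lt q a K : (Cmod q < 1)%R -> (Cmod (q * a) < 1)%R -> (Cmod (q * (a * q ^ K)) < 1)%R.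
Proof.
  intros Hq Ha. replace (q * (a * q ^ K)) with (q * a * q ^ K) by ring.
  eapply Rle_lt_trans. apply Cmod_mulpow_le; lra. auto.
Qed.

Lemma Hs_iter q a M K : (Cmod q < 1)%R -> (Cmod (q * a) < 1)%R ->
  Hs q a M - Hs q (a * q ^ K) M =
  sm (fun i => - (a * q ^ (S i) / (1 - a * q ^ (S i))) - w2 q (a * q ^ i) M) K.
Proof.
  intros Hq Ha. induction K.
  - simpl. replace (a * 1) with a by ring. ring.
  - rewrite sm_S. rewrite <- IHK.
    assert (E := Hs_fun q (a * q ^ K) M Hq (Cmod_shift_lt q a K Hq Ha)).
    replace (a * q ^ S K) with (a * q ^ K * q) by (rewrite Cpow_S; ring).
    rewrite <- E. ring.
Qed.

Definition g2 q x n := (1 - x * q ^ (2 * n)) * q ^ (n * n) * x ^ n / ((1 - x * q ^ n) * (1 - q ^ n)).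
Definition Gf q x M := sm (fun k => g2 q x (S k)) M.
Definition v2 q x n := x ^ n * q ^ (n * n) / (1 - x * q ^ n).

Lemma Gf_fun q x M : (Cmod q < 1)%R -> (Cmod (q * x) < 1)%R ->
  Gf q x M - Gf q (x * q) M = x * q / (1 - x * q) - v2 q x (S M).
Proof.
  intros Hq Hx.
  assert (N3 : forall k, 1 - x * q ^ k * q <> 0).
  { intros k. replace (x * q ^ k * q) with (q * x * q ^ k) by ring. apply fac_nz; auto. }
  assert (N4 : 1 - x * q <> 0).
  { intros E. apply (N3 O). simpl. rewrite <- E. ring. }
  induction M.
  - unfold Gf, v2. simpl. field. cbv beta. auto.
  - unfold Gf in *. simpl.
    replace (sm (fun k => g2 q x (S k)) M + g2 q x (S M) -
      (sm (fun k => g2 q (x * q) (S k)) M + g2 q (x * q) (S M))) with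
      ((sm (fun k => g2 q x (S k)) M - sm (fun k => g2 q (x * q) (S k)) M) +
       (g2 q x (S M) - g2 q (x * q) (S M))) by ring.
    rewrite IHM. set (k := S M).
    assert (Hk : (0 < k)%nat) by (unfold k; lia).
    assert (N6 : 1 - x * q ^ k <> 0).
    { unfold k. rewrite Cpow_S. replace (x * (q * q ^ M)) with (x * q ^ M * q) by ring. auto. }
    unfold g2, v2. fold k.
    replace (2 * k)%nat with (k + k)%nat by lia.
    replace (2 * S k)%nat with (k + k + 1 + 1)%nat by lia.
    replace (S k * S k)%nat with (k * k + k + k + 1)%nat by lia.
    rewrite Cpow_mult_l. rewrite !Cpow_add_r, !Cpow_S.
    field. cbv beta. repeat split; auto.
    all: try (apply Cmod_qpow_lt; auto).
    replace (x * (q * q ^ k)) with (x * q ^ k * q) by ring. auto.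
Qed.

Lemma Gf_iter q a M K : (Cmod q < 1)%R -> (Cmod (q * a) < 1)%R ->
  Gf q a M - Gf q (a * q ^ K) M =
  sm (fun i => a * q ^ (S i) / (1 - a * q ^ (S i)) - v2 q (a * q ^ i) (S M)) K.
Proof.
  intros Hq Ha. induction K.
  - simpl. replace (a * 1) with a by ring. ring.
  - rewrite sm_S. rewrite <- IHK.
    assert (E := Gf_fun q (a * q ^ K) M Hq (Cmod_shift_lt q a K Hq Ha)).
    replace (a * q ^ S K) with (a * q ^ K * q) by (rewrite Cpow_S; ring).
    rewrite <- E. ring.
Qed.

Definition cv (u : nat -> C) (l : C) := forall eps, (0 < eps)%R ->
  exists N, forall n, (N <= n)%nat -> (Cmod (u n - l) < eps)%R.
Definition tz (e : nat -> R) := forall eps, (0 < eps)%R ->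
  exists N, forall n, (N <= n)%nat -> (e n < eps)%R.

Lemma tz_geom c r : (0 <= c)%R -> (0 <= r < 1)%R -> tz (fun n => c * r ^ n)%R.
Proof.
  intros Hc Hr eps He.
  destruct (pow_lt_1_zero r ltac:(rewrite Rabs_pos_eq; lra) (eps / (c + 1))) as [N HN].
  { apply Rdiv_lt_0_compat; lra. }
  exists N. intros n Hn. specialize (HN n Hn). rewrite Rabs_pos_eq in HN by (apply pow_le; lra).
  assert (0 <= r ^ n)%R by (apply pow_le; lra).
  assert ((c + 1) * r ^ n < eps)%R.
  { apply (Rmult_lt_compat_l (c + 1)) in HN; [|lra]. replace ((c+1) * (eps / (c+1)))%R with eps in HN by (field; lra). lra. }
  nra.
Qed.

Lemma tz_plus e1 e2 : tz e1 -> tz e2 -> tz (fun n => e1 n + e2 n)%R.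
Proof.
  intros H1 H2 eps He. destruct (H1 (eps/2)%R) as [N1 HN1]; [lra|].
  destruct (H2 (eps/2)%R) as [N2 HN2]; [lra|]. exists (N1 + N2)%nat. intros n Hn.
  specialize (HN1 n ltac:(lia)). specialize (HN2 n ltac:(lia)). lra.
Qed.

Lemma cv_close u v l e : cv u l -> tz e -> (forall m, (Cmod (v (S m) - u (S m)) <= e m)%R) -> cv v l.
Proof.
  intros Hu He Hb eps Heps. destruct (Hu (eps/2)%R) as [N1 HN1]; [lra|].
  destruct (He (eps/2)%R) as [N2 HN2]; [lra|]. exists (S (N1 + N2)). intros n Hn.
  destruct n as [|m]; [lia|].
  replace (v (S m) - l) with ((v (S m) - u (S m)) + (u (S m) - l)) by ring.
  eapply Rle_lt_trans. apply Cmod_triangle.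
  specialize (HN1 (S m) ltac:(lia)). specialize (HN2 m ltac:(lia)). specialize (Hb m). lra.
Qed.

Lemma sm_bound f n c rho : (0 <= c)%R -> (0 <= rho < 1)%R ->
  (forall i, (i < n)%nat -> (Cmod (f i) <= c * rho ^ i)%R) -> (Cmod (sm f n) <= c / (1 - rho))%R.
Proof.
  intros Hc Hr H. eapply Rle_trans. apply Cmod_sm.
  eapply Rle_trans. apply rsm_le. exact H. rewrite rsm_scal.
  assert (rsm (fun i => rho ^ i)%R n <= / (1 - rho))%R by (apply rsm_geom; lra).
  unfold Rdiv. apply Rmult_le_compat_l; auto.
Qed.

Lemma Cmod_inv_le z B : (1 <= B * Cmod z)%R -> (Cmod (/ z) <= B)%R.
Proof.
  intros H. assert (z <> 0). { intros E; rewrite E, Cmod_0 in H. lra. }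
  rewrite Cmod_inv by auto. assert (0 < Cmod z)%R by (apply Cmod_gt_0; auto).
  apply (Rmult_le_reg_l (Cmod z)); auto. rewrite Rinv_r by lra. lra.
Qed.

Lemma Cmod_inv_1m z u : (Cmod z <= u)%R -> (u < 1)%R -> (Cmod (/ (1 - z)) <= / (1 - u))%R.
Proof.
  intros H1 H2. apply Cmod_inv_le. assert (H := Cmod_1m_ge z).
  assert (0 < 1 - u)%R by lra.
  apply (Rmult_le_reg_l (1 - u)); auto. rewrite <- Rmult_assoc, Rinv_r by lra. nra.
Qed.

Lemma pow_Sle u k : (0 <= u <= 1)%R -> (u ^ S k <= u)%R.
Proof. intros H. assert (u ^ S k <= u ^ 1)%R by (apply pow_le_dec; [lra|lia]). rewrite pow_1 in H0. lra. Qed.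

Lemma tri_ge n : (n <= tri n)%nat.
Proof. induction n; simpl; lia. Qed.

Lemma div_bound A D E B e : (0 <= A)%R -> (1 <= B * D)%R -> (e <= E)%R -> (0 < e)%R -> (0 < D)%R ->
  (A / (D * E) <= A * B / e)%R.
Proof.
  intros HA HD HE He HD0. unfold Rdiv. rewrite Rinv_mult.
  assert (/ D <= B)%R. { apply (Rmult_le_reg_l D); auto. rewrite Rinv_r by lra. lra. }
  assert (/ E <= / e)%R by (apply Rinv_le_contravar; lra).
  assert (0 < / D)%R by (apply Rinv_0_lt_compat; lra).
  assert (0 < / E)%R by (apply Rinv_0_lt_compat; lra).
  rewrite <- Rmult_assoc. apply Rmult_le_compat; try nra.
Qed.

Lemma Cmod_1mq q n : (Cmod q < 1)%R -> (0 < n)%nat -> (1 - Cmod q <= Cmod (1 - q ^ n))%R.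
Proof.
  intros Hq Hn. eapply Rle_trans; [|apply Cmod_1m_ge]. rewrite Cmod_pow.
  assert (Cmod q ^ n <= Cmod q ^ 1)%R by (apply pow_le_dec; [split; [apply Cmod_ge_0|lra]|lia]).
  rewrite pow_1 in H. lra.
Qed.

Ltac ulra := repeat match goal with [ x := _ |- _ ] => subst x end; lra.
Ltac unra := repeat match goal with [ x := _ |- _ ] => subst x end; nra.

Definition Th q a N := sm (fun i => - (a * q ^ (S i) / (1 - a * q ^ (S i)))) N.

Lemma partB_third q a L : (Cmod q < 1)%R -> (Cmod (q * a) < 1)%R -> cv (Hs q a) L -> cv (Th q a) L.
Proof.
  intros Hq Ha HL. set (r := Cmod q) in *. set (s := Cmod (q * a)) in *.
  assert (Hr : (0 <= r)%R) by apply Cmod_ge_0. assert (Hs0 : (0 <= s)%R) by apply Cmod_ge_0.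
  destruct (qp_unif q s Hq (conj Hs0 Ha)) as [B [HB HBq]].
  apply (cv_close (Hs q a) (Th q a) L
    (fun m => B * (s * s) / (1 - r) * s ^ m + B / ((1 - r) * (1 - s)) * r ^ m)%R); auto.
  { apply tz_plus; apply tz_geom; try lra.
    apply Rdiv_le_0_compat; [nra| lra].
    apply Rdiv_le_0_compat; [lra| apply Rmult_lt_0_compat; lra]. }
  intros m.
  assert (E := Hs_iter q a (S m) (S m) Hq Ha).
  assert (E2 : Th q a (S m) - Hs q a (S m) =
     sm (fun i => w2 q (a * q ^ i) (S m)) (S m) - Hs q (a * q ^ S m) (S m)).
  { unfold Th. rewrite sm_sub in E.
    replace (Hs q a (S m)) with (Hs q (a * q ^ S m) (S m) +
       (sm (fun i => - (a * q ^ S i / (1 - a * q ^ S i))) (S m) -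
        sm (fun i => w2 q (a * q ^ i) (S m)) (S m))) by (rewrite <- E; ring).
    ring. }
  rewrite E2. eapply Rle_trans. apply Cmod_triangle. rewrite Cmod_opp.
  apply Rplus_le_compat.
  -
    replace (B * (s * s) / (1 - r) * s ^ m)%R with (B * s ^ (S (S m)) / (1 - r))%R by (simpl; field; lra).
    apply sm_bound; [apply Rmult_le_pos; [lra| apply pow_le; lra] | lra |].
    intros i _. unfold w2. set (y := a * q ^ i). set (n := S (S m)).
    assert (Hqy : q * y = q * a * q ^ i) by (unfold y; ring).
    assert (Cy : (Cmod (q * y) = s * r ^ i)%R) by (rewrite Hqy, Cmod_mult, Cmod_pow; reflexivity).
    destruct (HBq (q * y) n) as [_ HB2]. { rewrite Hqy. apply Cmod_mulpow_le. ulra. }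
    assert (Hd : qp q (q * y) n <> 0). { intros Z; rewrite Z, Cmod_0 in HB2; lra. }
    unfold Cdiv. rewrite Cmod_mult, Cmod_mult, Cmod_pow, Cmod_pow, Cmod_opp.
    assert (HI := Cmod_inv_le _ _ HB2).
    assert (r ^ tri n <= r ^ n)%R by (apply pow_le_dec; [lra| apply tri_ge]).
    assert (Hyr : (Cmod y * r = s * r ^ i)%R) by (rewrite <- Cy, Cmod_mult; fold r; ring).
    assert ((Cmod y) ^ n * r ^ n = (s * r ^ i) ^ n)%R by (rewrite <- Hyr, Rpow_mult_distr; reflexivity).
    assert ((s * r ^ i) ^ n <= s ^ n * r ^ i)%R.
    { rewrite Rpow_mult_distr. apply Rmult_le_compat_l. apply pow_le; lra.
      unfold n. apply pow_Sle. split. apply pow_le; lra. apply pow_le1; lra. }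
    assert (0 <= Cmod y ^ n)%R by (apply pow_le, Cmod_ge_0).
    assert (0 <= r ^ tri n)%R by (apply pow_le; lra).
    assert (0 <= Cmod (/ qp q (q * y) n))%R by apply Cmod_ge_0.
    fold r. 
    apply Rle_trans with (Cmod y ^ n * r ^ n * B)%R; [|nra].
    apply Rmult_le_compat; try nra.
  -
    unfold Hs.
    replace (B / ((1 - r) * (1 - s)) * r ^ m)%R with (B * r ^ m / (1 - r) / (1 - s))%R by (field; ulra).
    apply sm_bound; [apply Rdiv_le_0_compat; [apply Rmult_le_pos; [lra|apply pow_le; lra]|lra] | lra |].
    intros k _. unfold s2. set (x := a * q ^ S m). set (n := S k).
    assert (Hqx : q * x = q * a * q ^ S m) by (unfold x; rewrite Cpow_S; ring).
    assert (Cx : (Cmod x = s * r ^ m)%R).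
    { unfold x. rewrite Cpow_S. replace (a * (q * q ^ m)) with (q * a * q ^ m) by ring.
      rewrite Cmod_mult, Cmod_pow. reflexivity. }
    destruct (HBq (q * x) n) as [_ HB2]. { rewrite Hqx. apply Cmod_mulpow_le. ulra. }
    assert (Hd : qp q (q * x) n <> 0). { intros Z; rewrite Z, Cmod_0 in HB2; lra. }
    assert (He : 1 - q ^ n <> 0) by (apply Cmod_qpow_lt; [exact Hq| unfold n; lia]).
    assert (HE := Cmod_1mq q n Hq ltac:(unfold n; lia)).
    assert (0 < Cmod (qp q (q * x) n))%R by (apply Cmod_gt_0; auto).
    unfold Cdiv. rewrite Cmod_mult, Cmod_inv, Cmod_mult, Cmod_mult, Cmod_pow, Cmod_pow, Cmod_opp
      by (apply Cmult_neq_0; auto).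
    fold r. rewrite Cx. fold (Rdiv (r ^ tri n * (s * r ^ m) ^ n) (Cmod (qp q (q * x) n) * Cmod (1 - q ^ n))).
    eapply Rle_trans. apply (div_bound _ _ _ B (1 - r)); auto; try ulra.
    apply Rmult_le_pos; apply pow_le; try lra. apply Rmult_le_pos; try lra. apply pow_le; lra.
    assert (Hrm : (0 <= r ^ m <= 1)%R) by (split; [apply pow_le; lra| apply pow_le1; lra]).
    assert (A1 : ((s * r ^ m) ^ k <= s ^ k)%R).
    { apply pow_incr. split. apply Rmult_le_pos; lra. nra. }
    assert (A2 : (r ^ tri n <= 1)%R) by (apply pow_le1; lra).
    assert (0 <= (s * r ^ m) ^ k)%R by (apply pow_le; apply Rmult_le_pos; lra).
    assert (0 <= r ^ tri n)%R by (apply pow_le; lra).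
    assert (0 <= s ^ k)%R by (apply pow_le; lra).
    unfold n in *. simpl pow at 2.
    assert (H4 : (r ^ tri (S k) * (s * r ^ m * (s * r ^ m) ^ k) <= r ^ m * s ^ k)%R).
    { apply Rle_trans with (1 * (s * r ^ m * (s * r ^ m) ^ k))%R. apply Rmult_le_compat_r; [apply Rmult_le_pos; [apply Rmult_le_pos; lra|lra]|lra].
      rewrite Rmult_1_l. apply Rmult_le_compat; auto. apply Rmult_le_pos; lra. nra. }
    apply (Rmult_le_compat_r B) in H4; [|lra].
    unfold Rdiv. apply Rle_trans with (r ^ m * s ^ k * B * / (1 - r))%R.
    apply Rmult_le_compat_r; [left; apply Rinv_0_lt_compat; ulra| exact H4].
    right; field; ulra.
Qed.

Definition NGf q a N := sm (fun k => - g2 q a (S k)) N.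

Lemma prod3_bound A X Y a x y : (Cmod A <= a)%R -> (Cmod X <= x)%R -> (Cmod Y <= y)%R ->
  (Cmod (A * X * Y) <= a * x * y)%R.
Proof.
  intros H1 H2 H3. rewrite !Cmod_mult.
  assert (0 <= Cmod A)%R by apply Cmod_ge_0. assert (0 <= Cmod X)%R by apply Cmod_ge_0.
  assert (0 <= Cmod Y)%R by apply Cmod_ge_0.
  apply Rmult_le_compat; try nra.
Qed.

Lemma partB_first q a L : (Cmod q < 1)%R -> (Cmod (q * a) < 1)%R -> cv (Th q a) L -> cv (NGf q a) L.
Proof.
  intros Hq Ha HL. set (r := Cmod q) in *. set (s := Cmod (q * a)) in *.
  assert (Hr : (0 <= r)%R) by apply Cmod_ge_0. assert (Hs0 : (0 <= s)%R) by apply Cmod_ge_0.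
  apply (cv_close (Th q a) (NGf q a) L
    (fun m => s * s / ((1 - s) * (1 - r)) * s ^ m + 2 / ((1 - s) * (1 - s) * (1 - r)) * r ^ m)%R); auto.
  { apply tz_plus; apply tz_geom; try lra.
    apply Rdiv_le_0_compat; [nra| apply Rmult_lt_0_compat; lra].
    apply Rdiv_le_0_compat; [lra| repeat apply Rmult_lt_0_compat; lra]. }
  intros m.
  assert (E := Gf_iter q a (S m) (S m) Hq Ha).
  assert (E2 : NGf q a (S m) - Th q a (S m) =
     sm (fun i => v2 q (a * q ^ i) (S (S m))) (S m) - Gf q (a * q ^ S m) (S m)).
  { unfold Th, NGf. rewrite sm_sub in E. rewrite sm_opp. fold (Gf q a (S m)).
    replace (Gf q a (S m)) with (Gf q (a * q ^ S m) (S m) +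
       (sm (fun i => (a * q ^ S i / (1 - a * q ^ S i))) (S m) -
        sm (fun i => v2 q (a * q ^ i) (S (S m))) (S m))) by (rewrite <- E; ring).
    replace (sm (fun i => - (a * q ^ S i / (1 - a * q ^ S i))) (S m)) with
      (- sm (fun i => (a * q ^ S i / (1 - a * q ^ S i))) (S m)) by (rewrite <- sm_opp; reflexivity).
    ring. }
  rewrite E2. eapply Rle_trans. apply Cmod_triangle. rewrite Cmod_opp.
  apply Rplus_le_compat.
  - replace (s * s / ((1 - s) * (1 - r)) * s ^ m)%R with (s ^ (S (S m)) / (1 - s) / (1 - r))%R by (simpl; field; ulra).
    apply sm_bound; [apply Rdiv_le_0_compat; [apply pow_le; lra| lra] | lra |].
    intros i _. unfold v2. set (y := a * q ^ i). set (n := S (S m)).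
    assert (Cy : (Cmod y * r = s * r ^ i)%R).
    { unfold y, s, r. rewrite <- Cmod_pow. rewrite <- !Cmod_mult. f_equal. ring. }
    assert (Hyq : y * q ^ n = q * a * q ^ (i + S m)).
    { unfold y, n. rewrite Cpow_S, Cpow_add_r, Cpow_S. ring. }
    assert (HD : (Cmod (y * q ^ n) <= s)%R) by (rewrite Hyq; apply Cmod_mulpow_le; ulra).
    assert (HI := Cmod_inv_1m (y * q ^ n) s HD Ha).
    unfold Cdiv. rewrite Cmod_mult, Cmod_mult, Cmod_pow, Cmod_pow. fold r.
    assert (r ^ (n * n) <= r ^ n)%R by (apply pow_le_dec; [lra| unfold n; nia]).
    assert ((Cmod y) ^ n * r ^ n = (s * r ^ i) ^ n)%R by (rewrite <- Cy, Rpow_mult_distr; reflexivity).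
    assert ((s * r ^ i) ^ n <= s ^ n * r ^ i)%R.
    { rewrite Rpow_mult_distr. apply Rmult_le_compat_l. apply pow_le; lra.
      unfold n. apply pow_Sle. split. apply pow_le; lra. apply pow_le1; lra. }
    assert (0 <= Cmod y ^ n)%R by (apply pow_le, Cmod_ge_0).
    assert (0 <= r ^ (n * n))%R by (apply pow_le; lra).
    assert (0 <= Cmod (/ (1 - y * q ^ n)))%R by apply Cmod_ge_0.
    assert (0 <= / (1 - s))%R by (left; apply Rinv_0_lt_compat; lra).
    apply Rle_trans with (Cmod y ^ n * r ^ n * / (1 - s))%R.
    apply Rmult_le_compat; try nra.
    rewrite H0. replace (s ^ n / (1 - s) * r ^ i)%R with (s ^ n * r ^ i * / (1 - s))%R by (unfold Rdiv; ring).
    apply Rmult_le_compat_r; lra.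
  - unfold Gf.
    replace (2 / ((1 - s) * (1 - s) * (1 - r)) * r ^ m)%R with (2 * r ^ m / ((1 - s) * (1 - r)) / (1 - s))%R by (field; ulra).
    apply sm_bound; [apply Rdiv_le_0_compat; [apply Rmult_le_pos; [lra|apply pow_le; lra]|apply Rmult_lt_0_compat; lra] | lra |].
    intros k _. unfold g2. set (x := a * q ^ S m). set (n := S k).
    assert (Cx : (Cmod x = s * r ^ m)%R).
    { unfold x. rewrite Cpow_S. replace (a * (q * q ^ m)) with (q * a * q ^ m) by ring.
      rewrite Cmod_mult, Cmod_pow. reflexivity. }
    assert (Hrm : (0 <= r ^ m <= 1)%R) by (split; [apply pow_le; lra| apply pow_le1; lra]).
    assert (Cx1 : (Cmod x <= 1)%R) by (rewrite Cx; nra).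
    assert (Hxq : x * q ^ n = q * a * q ^ (S (m + k))).
    { unfold x, n. rewrite !Cpow_S, Cpow_add_r. ring. }
    assert (HD : (Cmod (x * q ^ n) <= s)%R) by (rewrite Hxq; apply Cmod_mulpow_le; ulra).
    assert (HI := Cmod_inv_1m (x * q ^ n) s HD Ha).
    assert (HD2 : (Cmod (q ^ n) <= r)%R).
    { assert (Hp1 : (r ^ n <= r ^ 1)%R) by (apply pow_le_dec; [lra|unfold n; lia]).
      rewrite pow_1 in Hp1. rewrite Cmod_pow. exact Hp1. }
    assert (HI2 := Cmod_inv_1m (q ^ n) r HD2 Hq).
    assert (Hne1 : 1 - x * q ^ n <> 0). { intros Z. assert (H := Cmod_1m_ge (x * q ^ n)). rewrite Z, Cmod_0 in H. lra. }
    assert (Hne2 : 1 - q ^ n <> 0). { intros Z. assert (H := Cmod_1m_ge (q ^ n)). rewrite Z, Cmod_0 in H. ulra. }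
    replace ((1 - x * q ^ (2 * n)) * q ^ (n * n) * x ^ n / ((1 - x * q ^ n) * (1 - q ^ n))) with
      (((1 - x * q ^ (2 * n)) * (q ^ (n * n) * x ^ n)) * / (1 - x * q ^ n) * / (1 - q ^ n)) by (field; auto).
    replace (2 * r ^ m / ((1 - s) * (1 - r)) * s ^ k)%R with ((2 * (r ^ m * s ^ k)) * / (1 - s) * / (1 - r))%R by (field; ulra).
    apply prod3_bound; auto.
    rewrite Cmod_mult. apply Rmult_le_compat; try apply Cmod_ge_0.
    + eapply Rle_trans. apply Cmod_1m_le. assert (Cmod (x * q ^ (2 * n)) <= Cmod x)%R by (apply Cmod_mulpow_le; ulra). lra.
    + rewrite Cmod_mult, !Cmod_pow. fold r. rewrite Cx.
      assert (A1 : ((s * r ^ m) ^ k <= s ^ k)%R).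
      { apply pow_incr. split. apply Rmult_le_pos; lra. nra. }
      assert (A2 : (r ^ (n * n) <= 1)%R) by (apply pow_le1; lra).
      assert (0 <= (s * r ^ m) ^ k)%R by (apply pow_le; apply Rmult_le_pos; lra).
      assert (0 <= r ^ (n * n))%R by (apply pow_le; lra).
      assert (0 <= s ^ k)%R by (apply pow_le; lra).
      unfold n in *. simpl pow at 2.
      apply Rle_trans with (1 * (s * r ^ m * (s * r ^ m) ^ k))%R. apply Rmult_le_compat_r; [apply Rmult_le_pos; [apply Rmult_le_pos; lra|lra]|lra].
      rewrite Rmult_1_l. apply Rmult_le_compat; auto. apply Rmult_le_pos; lra. nra.
Qed.

Definition fw q a j m := qp q (q ^ j) m * ((- a) * q ^ j) ^ m * q ^ (tri m) /
   (qp q q m * qp q (a * q * q ^ j) (m + j)).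
Definition cw q a j := (1 - a * q * q ^ j * q ^ j) / (a * q * q ^ j * (1 - q ^ j)).
Definition Gc q a j m := cw q a j * (1 - q ^ m) * fw q a j m.

Lemma fac_nz' (q x z : C) k : (Cmod q < 1)%R -> (Cmod x < 1)%R -> z = x * q ^ k -> 1 - z <> 0.
Proof. intros H1 H2 ->. apply fac_nz; auto. Qed.

Lemma W1 (q a : C) j : q <> 0 -> a <> 0 -> (0 < j)%nat -> (Cmod q < 1)%R -> (Cmod (q * a) < 1)%R ->
  fw q a j 0 + Gc q a j 1 = 0.
Proof.
  intros Hq0 Ha0 Hj Hq Ha.
  assert (Ha' : (Cmod (a * q) < 1)%R) by (replace (a * q) with (q * a) by ring; auto).
  assert (HX : q ^ j <> 0) by (apply Cpow_nz; auto).
  assert (H1 : 1 - q ^ j <> 0) by (apply Cmod_qpow_lt; auto).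
  assert (H2 : 1 - q <> 0) by (apply (fac_nz' q q q 0); auto; simpl; ring).
  assert (Haqx : (Cmod (a * q * q ^ j) < 1)%R) by (eapply Rle_lt_trans; [apply Cmod_mulpow_le; lra| auto]).
  assert (H3 : qp q (a * q * q ^ j) j <> 0) by (apply qp_nz; auto).
  assert (H4 : 1 - a * q * q ^ j * q ^ j <> 0) by (apply (fac_nz' q (a * q * q ^ j) _ j); auto).
  unfold Gc, fw, cw. simpl tri. replace (1 + j)%nat with (S j) by lia. rewrite Nat.add_0_l.
  change (qp q (a * q * q ^ j) (S j)) with (qp q (a * q * q ^ j) j * (1 - a * q * q ^ j * q ^ j)).
  simpl qp. simpl Cpow. field. cbv beta. repeat split; auto.
Qed.

Lemma qp_S (q x : C) n : qp q x (S n) = qp q x n * (1 - x * q ^ n).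
Proof. reflexivity. Qed.

Section WZ.
Variables (q a : C) (j m : nat).
Hypotheses (Hq0 : q <> 0) (Ha0 : a <> 0) (Hj : (0 < j)%nat) (Hq : (Cmod q < 1)%R) (Ha : (Cmod (q * a) < 1)%R).

Let X := q ^ j.
Let Y := q ^ m.
Let A := (- a) ^ m.
Let Z := (q ^ j) ^ m.
Let T := q ^ (tri m).
Let P := qp q (q * q ^ j) m.
Let Q := qp q q m.
Let R0 := qp q (a * q * (q * q ^ j)) (m + j).

Lemma Ha' : (Cmod (a * q) < 1)%R.
Proof. rewrite (Cmult_comm a q); exact Ha. Qed.
Lemma Haqx k : (Cmod (a * q * q ^ k) < 1)%R.
Proof. eapply Rle_lt_trans; [apply Cmod_mulpow_le; lra| apply Ha']. Qed.

Lemma nzQ : Q <> 0. Proof. apply qp_nz; auto. Qed.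
Lemma nzR0 : R0 <> 0.
Proof. apply qp_nz; auto. replace (a * q * (q * q ^ j)) with (a * q * q ^ (S j)) by (rewrite Cpow_S; ring). apply Haqx. Qed.
Lemma nzqY : 1 - q * Y <> 0. Proof. apply (fac_nz' q q _ m); auto. Qed.
Lemma nzqqY : 1 - q * (q * Y) <> 0. Proof. apply (fac_nz' q q _ (S m)); auto. Qed.
Lemma nzaqX : 1 - a * q * X <> 0. Proof. apply (fac_nz' q (a * q) _ j); auto. apply Ha'. Qed.
Lemma nzbig : 1 - a * q * (q * X) * (Y * X) <> 0.
Proof. apply (fac_nz' q (a * q) _ (S (m + j + j))); auto. apply Ha'. unfold X, Y. rewrite Cpow_S, !Cpow_add_r. ring. Qed.

Lemma F1 : fw q a (S j) m = P * (A * (Y * Z)) * T / (Q * (R0 * (1 - a * q * (q * X) * (Y * X)))).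
Proof.
  unfold fw. rewrite (Cpow_S q j).
  replace (m + S j)%nat with (S (m + j)) by lia. rewrite qp_S. rewrite Cpow_add_r.
  rewrite !Cpow_mult_l. unfold P, A, Y, Z, T, Q, R0, X. ring.
Qed.

Lemma e1 : qp q (q ^ j) (S m) = (1 - X) * P.
Proof. rewrite qp_shift. unfold P, X. replace (q ^ j * q) with (q * q ^ j) by ring. reflexivity. Qed.
Lemma e2 : ((- a) * q ^ j) ^ (S m) = (- a * X) * (A * Z).
Proof. rewrite Cpow_S, Cpow_mult_l. reflexivity. Qed.
Lemma e3 : q ^ (tri (S m)) = T * (q * Y).
Proof. change (tri (S m)) with (tri m + S m)%nat. rewrite Cpow_add_r. reflexivity. Qed.
Lemma e4 : qp q q (S m) = Q * (1 - q * Y).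
Proof. reflexivity. Qed.
Lemma e5 : qp q (a * q * q ^ j) (S m + j) = (1 - a * q * X) * R0.
Proof. simpl (S m + j)%nat. rewrite qp_shift. unfold R0, X. replace (a * q * q ^ j * q) with (a * q * (q * q ^ j)) by ring. reflexivity. Qed.

Lemma F2 : fw q a j (S m) = ((1 - X) * P) * ((- a * X) * (A * Z)) * (T * (q * Y)) /
   ((Q * (1 - q * Y)) * ((1 - a * q * X) * R0)).
Proof. unfold fw. rewrite e1, e2, e3, e4, e5. reflexivity. Qed.

Lemma F3 : fw q a j (S (S m)) = ((1 - X) * P * (1 - X * (q * Y))) * ((- a * X) * ((- a * X) * (A * Z))) *
   (T * (q * Y) * (q * (q * Y))) /
   ((Q * (1 - q * Y) * (1 - q * (q * Y))) * ((1 - a * q * X) * (R0 * (1 - a * q * (q * X) * (Y * X))))).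
Proof.
  unfold fw. rewrite qp_S, e1. rewrite (Cpow_S _ (S m)), e2.
  change (tri (S (S m))) with (tri (S m) + S (S m))%nat. rewrite Cpow_add_r, e3.
  rewrite qp_S, e4. simpl (S (S m) + j)%nat. rewrite qp_shift, qp_S.
  replace (a * q * q ^ j * q) with (a * q * (q * q ^ j)) by ring. fold R0.
  rewrite Cpow_add_r. unfold X, Y. rewrite !Cpow_S. ring.
Qed.

Lemma W2 : fw q a (S j) m = fw q a j (S m) + Gc q a j (S (S m)) - Gc q a j (S m).
Proof.
  unfold Gc, cw. rewrite F1, F2, F3. fold X. rewrite !Cpow_S. fold Y.
  assert (HX : X <> 0) by (apply Cpow_nz; auto).
  assert (H1 : 1 - X <> 0) by (apply Cmod_qpow_lt; auto).
  assert (N1 := nzQ). assert (N2 := nzR0). assert (N3 := nzqY). assert (N4 := nzqqY).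
  assert (N5 := nzaqX). assert (N6 := nzbig).
  field. cbv beta. repeat split; auto.
Qed.
End WZ.

Definition Sf q a j M := sm (fw q a j) (S M).
Definition Ew q a j M := 1 - Sf q a j M.

Lemma sm_tele (g : nat -> C) n : sm (fun m => g (S m) - g m) n = g n - g O.
Proof. induction n; simpl. ring. rewrite IHn. ring. Qed.

Lemma Ew_step (q a : C) j M : q <> 0 -> a <> 0 -> (0 < j)%nat -> (Cmod q < 1)%R -> (Cmod (q * a) < 1)%R ->
  Ew q a (S j) M = Ew q a j (S M) - Gc q a j (S (S M)).
Proof.
  intros Hq0 Ha0 Hj Hq Ha. unfold Ew, Sf.
  rewrite (sm_ext (fw q a (S j)) (fun m => fw q a j (S m) + (Gc q a j (S (S m)) - Gc q a j (S m))) (S M)).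
  2:{ intros i _. rewrite (W2 q a j i Hq0 Ha0 Hj Hq Ha). ring. }
  rewrite sm_add, (sm_tele (fun m => Gc q a j (S m))).
  rewrite (sm_shift (fw q a j) (S M)).
  assert (E := W1 q a j Hq0 Ha0 Hj Hq Ha).
  assert (E' : fw q a j 0 = - Gc q a j 1).
  { replace (fw q a j 0) with ((fw q a j 0 + Gc q a j 1) - Gc q a j 1) by ring. rewrite E. ring. }
  rewrite E'. ring.
Qed.

Lemma Ew1 (q a : C) M : (Cmod q < 1)%R -> (Cmod (q * a) < 1)%R ->
  Ew q a 1 M = ((- a) * q) ^ (S M) * q ^ (tri (S M)) / qp q (a * q * q) (S M).
Proof.
  intros Hq Ha.
  assert (Ha' : (Cmod (a * q) < 1)%R) by (rewrite (Cmult_comm a q); exact Ha).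
  assert (Haqq : (Cmod (a * q * q) < 1)%R).
  { replace (a * q * q) with (a * q * q ^ 1) by (rewrite Cpow_1_r; reflexivity).
    eapply Rle_lt_trans; [apply Cmod_mulpow_le; lra| exact Ha']. }
  assert (HF : forall m, fw q a 1 m = ((- a) * q) ^ m * q ^ (tri m) / qp q (a * q * q) (S m)).
  { intros m. unfold fw. rewrite Cpow_1_r. replace (m + 1)%nat with (S m) by lia.
    field. split; apply qp_nz; auto. }
  assert (N1 : forall k, qp q (a * q * q) k <> 0) by (intros; apply qp_nz; auto).
  assert (N2 : forall k, 1 - a * q * q * q ^ k <> 0) by (intros; apply fac_nz; auto).
  induction M.
  - unfold Ew, Sf. simpl sm. rewrite HF. simpl. field. cbv beta.
    specialize (N2 O). simpl in N2. replace (1 - a * q * q) with (1 - a * q * q * 1) by ring. auto.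
  - unfold Ew, Sf in *. rewrite sm_S. rewrite HF.
    replace (1 - (sm (fw q a 1) (S M) + ((- a) * q) ^ S M * q ^ tri (S M) / qp q (a * q * q) (S (S M)))) with
      ((1 - sm (fw q a 1) (S M)) - ((- a) * q) ^ S M * q ^ tri (S M) / qp q (a * q * q) (S (S M))) by ring.
    rewrite IHM. rewrite (qp_S q _ (S M)). rewrite (Cpow_S _ (S M)).
    change (tri (S (S M))) with (tri (S M) + S (S M))%nat. rewrite Cpow_add_r.
    rewrite (Cpow_S q (S M)). field. cbv beta. split; auto.
Qed.

Lemma Cmod_inv2_le D1 D2 B1 B2 : (0 <= B1)%R -> (0 <= B2)%R -> (1 <= B1 * Cmod D1)%R -> (1 <= B2 * Cmod D2)%R ->
  (Cmod (/ (D1 * D2)) <= B1 * B2)%R.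
Proof.
  intros H0 H0' H1 H2. apply Cmod_inv_le. rewrite Cmod_mult.
  assert (0 <= Cmod D1)%R by apply Cmod_ge_0. assert (0 <= Cmod D2)%R by apply Cmod_ge_0.
  replace (B1 * B2 * (Cmod D1 * Cmod D2))%R with ((B1 * Cmod D1) * (B2 * Cmod D2))%R by ring. nra.
Qed.

Lemma fw_bound (q a : C) : (Cmod q < 1)%R -> (Cmod (q * a) < 1)%R ->
  exists K, (0 <= K)%R /\ forall J m, (Cmod (fw q a (S J) m) <= K * Cmod (q * a) ^ m)%R.
Proof.
  intros Hq Ha.
  assert (Hr : (0 <= Cmod q)%R) by apply Cmod_ge_0. assert (Hs : (0 <= Cmod (q * a))%R) by apply Cmod_ge_0.
  destruct (qp_unif q (Cmod q) Hq (conj Hr Hq)) as [B1 [HB1 H1]].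
  destruct (qp_unif q (Cmod (q * a)) Hq (conj Hs Ha)) as [B2 [HB2 H2]].
  exists (B1 * (B1 * B2))%R. split. apply Rmult_le_pos; [lra|]. apply Rmult_le_pos; lra.
  intros J m. unfold fw. unfold Cdiv. rewrite Cmod_mult.
  assert (Hi : (Cmod (/ (qp q q m * qp q (a * q * q ^ S J) (m + S J))) <= B1 * B2)%R).
  { apply Cmod_inv2_le; try lra. apply H1; lra. apply H2.
    replace (a * q * q ^ S J) with (q * a * q ^ S J) by ring. apply Cmod_mulpow_le; lra. }
  rewrite !Cmod_mult. replace (Cmod q * Cmod a)%R with (Cmod (q * a)) by apply Cmod_mult.
  assert (A1 : (Cmod (qp q (q ^ S J) m) <= B1)%R).
  { apply H1. rewrite Cpow_S. replace (q * q ^ J) with (q * q ^ J) by ring. apply Cmod_mulpow_le; lra. }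
  assert (A2 : (Cmod ((- a * q ^ S J) ^ m) <= Cmod (q * a) ^ m)%R).
  { rewrite Cmod_pow. apply pow_incr. split. apply Cmod_ge_0.
    replace (- a * q ^ S J) with (- (q * a * q ^ J)) by (rewrite Cpow_S; ring).
    rewrite Cmod_opp. apply Cmod_mulpow_le; lra. }
  assert (A3 : (Cmod (q ^ tri m) <= 1)%R) by (rewrite Cmod_pow; apply pow_le1; lra).
  assert (0 <= Cmod (qp q (q ^ S J) m))%R by apply Cmod_ge_0.
  assert (0 <= Cmod ((- a * q ^ S J) ^ m))%R by apply Cmod_ge_0.
  assert (0 <= Cmod (q ^ tri m))%R by apply Cmod_ge_0.
  assert (0 <= Cmod (q * a) ^ m)%R by (apply pow_le; lra).
  apply Rle_trans with (B1 * Cmod (q * a) ^ m * 1 * (B1 * B2))%R; [|right; ring].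
  apply Rmult_le_compat; try (apply Rmult_le_pos; try apply Rmult_le_pos; lra); try apply Cmod_ge_0; auto.
  apply Rmult_le_compat; try (apply Rmult_le_pos; lra); auto.
  apply Rmult_le_compat; auto.
Qed.

Lemma Ew_bound (q a : C) : (Cmod q < 1)%R -> (Cmod (q * a) < 1)%R ->
  exists Kb, (0 <= Kb)%R /\ forall J M, (Cmod (Ew q a (S J) M) <= Kb)%R.
Proof.
  intros Hq Ha. destruct (fw_bound q a Hq Ha) as [K [HK HKb]].
  assert (Hs : (0 <= Cmod (q * a))%R) by apply Cmod_ge_0.
  exists (1 + K / (1 - Cmod (q * a)))%R. split.
  assert (0 <= K / (1 - Cmod (q * a)))%R by (apply Rdiv_le_0_compat; lra). lra.
  intros J M. unfold Ew. eapply Rle_trans. apply Cmod_1m_le. apply Rplus_le_compat_l.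
  unfold Sf. apply sm_bound; auto.
Qed.

Lemma Ew_tend (q a : C) : q <> 0 -> a <> 0 -> (Cmod q < 1)%R -> (Cmod (q * a) < 1)%R ->
  forall J eps, (0 < eps)%R -> exists M0, forall M, (M0 <= M)%nat -> (Cmod (Ew q a (S J) M) < eps)%R.
Proof.
  intros Hq0 Ha0 Hq Ha.
  assert (Hr : (0 <= Cmod q)%R) by apply Cmod_ge_0. assert (Hs : (0 <= Cmod (q * a))%R) by apply Cmod_ge_0.
  destruct (fw_bound q a Hq Ha) as [K [HK HKb]].
  induction J; intros eps Heps.
  - destruct (qp_unif q (Cmod (q * a)) Hq (conj Hs Ha)) as [B2 [HB2 H2]].
    destruct (tz_geom (B2 * Cmod (q * a)) (Cmod (q * a)) ltac:(apply Rmult_le_pos; lra) (conj Hs Ha) eps Heps)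
      as [M0 HM0].
    exists M0. intros M HM. specialize (HM0 M HM). eapply Rle_lt_trans; [|exact HM0].
    rewrite Ew1 by auto. unfold Cdiv. rewrite Cmod_mult, Cmod_mult, Cmod_pow, Cmod_pow.
    assert (Hi : (Cmod (/ qp q (a * q * q) (S M)) <= B2)%R).
    { apply Cmod_inv_le. apply H2. replace (a * q * q) with (q * a * q ^ 1) by (rewrite Cpow_1_r; ring).
      apply Cmod_mulpow_le; lra. }
    replace (Cmod (- a * q)) with (Cmod (q * a)) by (rewrite <- Cmod_opp; f_equal; ring).
    assert (Cmod q ^ tri (S M) <= 1)%R by (apply pow_le1; lra).
    assert (0 <= Cmod q ^ tri (S M))%R by (apply pow_le; lra).
    assert (0 <= Cmod (q * a) ^ S M)%R by (apply pow_le; lra).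
    assert (0 <= Cmod (/ qp q (a * q * q) (S M)))%R by apply Cmod_ge_0.
    apply Rle_trans with (Cmod (q * a) ^ S M * 1 * B2)%R.
    { apply Rmult_le_compat; try nra. }
    simpl. right; ring.
  - destruct (IHJ (eps / 2)%R) as [M1 HM1]; [lra|].
    set (c := Cmod (cw q a (S J))).
    assert (Hc : (0 <= c)%R) by apply Cmod_ge_0.
    destruct (tz_geom (c * 2 * K * (Cmod (q * a) * Cmod (q * a))) (Cmod (q * a))
       ltac:(repeat apply Rmult_le_pos; lra) (conj Hs Ha) (eps / 2)%R ltac:(lra)) as [M2 HM2].
    exists (M1 + M2)%nat. intros M HM.
    rewrite Ew_step by (auto; lia).
    eapply Rle_lt_trans. apply Cmod_triangle. rewrite Cmod_opp.
    specialize (HM1 (S M) ltac:(lia)). specialize (HM2 M ltac:(lia)).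
    assert (Cmod (Gc q a (S J) (S (S M))) <= c * 2 * K * (Cmod (q * a) * Cmod (q * a)) * Cmod (q * a) ^ M)%R.
    { unfold Gc. rewrite Cmod_mult, Cmod_mult. fold c.
      assert (Cmod (1 - q ^ S (S M)) <= 2)%R.
      { eapply Rle_trans. apply Cmod_1m_le. rewrite Cmod_pow. assert (Cmod q ^ S (S M) <= 1)%R by (apply pow_le1; lra). lra. }
      specialize (HKb J (S (S M))).
      assert (0 <= Cmod (1 - q ^ S (S M)))%R by apply Cmod_ge_0.
      apply Rle_trans with (c * 2 * (K * Cmod (q * a) ^ S (S M)))%R.
      { apply Rmult_le_compat. apply Rmult_le_pos; lra. apply Cmod_ge_0.
        apply Rmult_le_compat_l; lra. exact HKb. }
      simpl. right; ring. }
    lra.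
Qed.

Lemma tri_add n m : tri (n + m) = (tri n + tri m + n * m)%nat.
Proof. induction m. rewrite Nat.add_0_r. simpl. lia. rewrite Nat.add_succ_r. simpl. rewrite IHm. nia. Qed.

Lemma sm_tri (F : nat -> nat -> C) N :
  sm (fun k => sm (F k) (S k)) N = sm (fun J => sm (fun i => F (J + i)%nat J) (N - J)) N.
Proof.
  induction N. reflexivity.
  rewrite sm_S, IHN. rewrite (sm_S (fun J => sm (fun i => F (J + i)%nat J) (S N - J)) N).
  replace (S N - N)%nat with 1%nat by lia.
  rewrite (sm_ext (fun J => sm (fun i => F (J + i)%nat J) (S N - J))
                  (fun J => sm (fun i => F (J + i)%nat J) (N - J) + F N J) N).
  2:{ intros J HJ. replace (S N - J)%nat with (S (N - J)) by lia. rewrite sm_S.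
      replace (J + (N - J))%nat with N by lia. reflexivity. }
  rewrite sm_add. simpl. rewrite Nat.add_0_r. ring.
Qed.

Definition tbC (q a : C) (beta : nat -> C) k := qp q q k * (- a) ^ (S k) * (q ^ (tri (S k)) * beta (S k)).
Definition taC (q a : C) (alpha : nat -> C) k :=
  (qp q q k * ((- a) ^ (S k) * q ^ (tri (S k)))) / qp q (q * a) (S k) * alpha (S k).

Lemma A1pt (q a : C) (alpha : nat -> C) J i : (Cmod q < 1)%R -> (Cmod (q * a) < 1)%R ->
  qp q q (J + i) * (- a) ^ S (J + i) * q ^ tri (S (J + i)) * alpha (S J) /
    (qp q q (J + i - J) * qp q (a * q) (S (J + i) + S J))
  = taC q a alpha J * fw q a (S J) i.
Proof.
  intros Hq Ha.
  assert (Ha' : (Cmod (a * q) < 1)%R) by (rewrite (Cmult_comm a q); exact Ha).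
  assert (N1 : qp q q i <> 0) by (apply qp_nz; auto).
  assert (N2 : qp q (a * q) (S J) <> 0) by (apply qp_nz; auto).
  assert (N3 : qp q (a * q * q ^ S J) (i + S J) <> 0).
  { apply qp_nz; auto. eapply Rle_lt_trans; [apply Cmod_mulpow_le; lra| exact Ha']. }
  unfold taC, fw. replace (J + i - J)%nat with i by lia.
  replace (S (J + i) + S J)%nat with (S J + (i + S J))%nat by lia.
  rewrite qp_add. replace (q * a) with (a * q) by ring.
  rewrite qp_add. replace (q * q ^ J) with (q ^ S J) by (rewrite Cpow_S; ring).
  replace (S (J + i)) with (S J + i)%nat by lia. rewrite tri_add, !Cpow_add_r, Cpow_mult_r.
  rewrite Cpow_mult_l. field. cbv beta. repeat split; auto.
Qed.

Lemma A1 (q a : C) (alpha beta : nat -> C) N : (Cmod q < 1)%R -> (Cmod (q * a) < 1)%R -> alpha O = 1 ->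
  (forall n, (0 < n)%nat -> beta n = sm (fun j => alpha j / (qp q q (n - j) * qp q (a * q) (n + j))) (S n)) ->
  sm (tbC q a beta) N - sm (taC q a alpha) N =
  Hs q a N - sm (fun J => taC q a alpha J * Ew q a (S J) (N - S J)) N.
Proof.
  intros Hq Ha H0 Hb.
  assert (Ha' : (Cmod (a * q) < 1)%R) by (rewrite (Cmult_comm a q); exact Ha).
  set (Fk := fun k J => qp q q k * (- a) ^ (S k) * q ^ (tri (S k)) * alpha (S J) /
                        (qp q q (k - J) * qp q (a * q) (S k + S J))).
  assert (St : forall k, tbC q a beta k = s2 q a (S k) + sm (Fk k) (S k)).
  { intros k. unfold tbC. rewrite (Hb (S k)) by lia. rewrite sm_shift. rewrite H0.
    rewrite Cmult_plus_distr_l, Cmult_plus_distr_l.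
    rewrite <- sm_scal, <- sm_scal. f_equal.
    - unfold s2. rewrite Nat.sub_0_r, Nat.add_0_r. rewrite qp_S, (Cpow_S q k).
      replace (a * q) with (q * a) by ring.
      assert (qp q q k <> 0) by (apply qp_nz; auto).
      assert (qp q (q * a) (S k) <> 0) by (apply qp_nz; auto).
      assert (1 - q * q ^ k <> 0) by (apply fac_nz; auto).
      assert (qp q (q * a) k <> 0) by (apply qp_nz; auto).
      assert (1 - q * a * q ^ k <> 0) by (apply fac_nz; auto).
      rewrite qp_S. field. cbv beta. repeat split; auto.
    - apply sm_ext. intros J _. unfold Fk. simpl (S k - S J)%nat. unfold Cdiv. ring. }
  rewrite (sm_ext (tbC q a beta) (fun k => s2 q a (S k) + sm (Fk k) (S k)) N) by (intros; apply St).
  rewrite sm_add. rewrite sm_tri. fold (Hs q a N).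
  rewrite (sm_ext (fun J => sm (fun i => Fk (J + i)%nat J) (N - J))
                  (fun J => taC q a alpha J * Sf q a (S J) (N - S J)) N).
  2:{ intros J HJ. unfold Sf. replace (S (N - S J)) with (N - J)%nat by lia.
      rewrite <- sm_scal. apply sm_ext. intros i _. unfold Fk. apply A1pt; auto. }
  unfold Ew. 
  rewrite (sm_ext (fun J => taC q a alpha J * (1 - Sf q a (S J) (N - S J)))
                  (fun J => taC q a alpha J - taC q a alpha J * Sf q a (S J) (N - S J)) N)
    by (intros; ring).
  rewrite sm_sub. ring.
Qed.

Lemma fin_unif (P : nat -> nat -> R) :
  (forall J eps, (0 < eps)%R -> exists M0, forall M, (M0 <= M)%nat -> (P J M < eps)%R) ->
  forall J0 eps, (0 < eps)%R -> exists M0, forall J M, (J < J0)%nat -> (M0 <= M)%nat -> (P J M < eps)%R.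
Proof.
  intros H J0 eps He. induction J0.
  - exists O. intros; lia.
  - destruct IHJ0 as [M1 HM1]. destruct (H J0 eps He) as [M2 HM2].
    exists (M1 + M2)%nat. intros J M HJ HM.
    destruct (Nat.eq_dec J J0) as [->|]. apply HM2; lia. apply HM1; lia.
Qed.

Lemma cv_sub u v l1 l2 : cv u l1 -> cv v l2 -> cv (fun n => u n - v n) (l1 - l2).
Proof.
  intros H1 H2 eps He. destruct (H1 (eps/2)%R) as [N1 HN1]; [lra|].
  destruct (H2 (eps/2)%R) as [N2 HN2]; [lra|]. exists (N1 + N2)%nat. intros n Hn.
  replace (u n - v n - (l1 - l2)) with ((u n - l1) + - (v n - l2)) by ring.
  eapply Rle_lt_trans. apply Cmod_triangle. rewrite Cmod_opp.
  specialize (HN1 n ltac:(lia)). specialize (HN2 n ltac:(lia)). lra.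
Qed.

Lemma cv_close2 u v l : cv u l ->
  (forall eps, (0 < eps)%R -> exists N, forall n, (N <= n)%nat -> (Cmod (v n - u n) < eps)%R) -> cv v l.
Proof.
  intros Hu He eps Heps. destruct (Hu (eps/2)%R) as [N1 HN1]; [lra|].
  destruct (He (eps/2)%R) as [N2 HN2]; [lra|]. exists (N1 + N2)%nat. intros n Hn.
  replace (v n - l) with ((v n - u n) + (u n - l)) by ring.
  eapply Rle_lt_trans. apply Cmod_triangle.
  specialize (HN1 n ltac:(lia)). specialize (HN2 n ltac:(lia)). lra.
Qed.

Lemma partA (q a : C) (alpha beta : nat -> C) Sb Sa : (Cmod q < 1)%R -> (Cmod (q * a) < 1)%R -> alpha O = 1 ->
  (forall n, (0 < n)%nat -> beta n = sm (fun j => alpha j / (qp q q (n - j) * qp q (a * q) (n + j))) (S n)) ->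
  (exists sg, forall eps, (0 < eps)%R -> exists N, forall n, (N <= n)%nat ->
      (Rabs (rsm (fun k => Cmod (taC q a alpha k)) n - sg) < eps)%R) ->
  cv (sm (tbC q a beta)) Sb -> cv (sm (taC q a alpha)) Sa -> cv (Hs q a) (Sb - Sa).
Proof.
  intros Hq Ha H0 Hb [sg Hsg] Hcb Hca.
  apply (cv_close2 _ _ _ (cv_sub _ _ _ _ Hcb Hca)).
  intros eps Heps.
  set (err := fun N => sm (fun J => taC q a alpha J * Ew q a (S J) (N - S J)) N).
  assert (Herr : forall N, Hs q a N - (sm (tbC q a beta) N - sm (taC q a alpha) N) = err N).
  { intros N. rewrite A1 by auto. unfold err. ring. }
  destruct (Classical_Prop.classic (q = 0 \/ a = 0)) as [Hz|Hnz].
  { exists O. intros n _. rewrite Herr. unfold err.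
    rewrite (sm_zero (fun J => taC q a alpha J * Ew q a (S J) (n - S J)) n). rewrite Cmod_0; lra.
    intros J _. unfold taC.
    replace ((- a) ^ S J * q ^ tri (S J)) with (RtoC 0). unfold Cdiv. ring.
    simpl tri. rewrite Cpow_add_r, (Cpow_S q J), (Cpow_S (- a) J).
    destruct Hz as [->| ->]; ring. }
  assert (Hq0 : q <> 0) by tauto. assert (Ha0 : a <> 0) by tauto.
  destruct (Ew_bound q a Hq Ha) as [Kb [HKb HKbb]].
  set (at_ := fun k => Cmod (taC q a alpha k)).
  assert (Hat : forall k, (0 <= at_ k)%R) by (intros; apply Cmod_ge_0).
  destruct (Hsg (eps / (4 * (Kb + 1)))%R) as [J0 HJ0].
  { apply Rdiv_lt_0_compat; lra. }
  set (S0 := rsm at_ J0).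
  assert (HS0 : (0 <= S0)%R) by (apply rsm_nonneg; auto).
  destruct (fin_unif (fun J M => Cmod (Ew q a (S J) M)) (Ew_tend q a Hq0 Ha0 Hq Ha) J0
     (eps / (2 * (S0 + 1)))%R) as [M0 HM0].
  { apply Rdiv_lt_0_compat; lra. }
  exists (S (J0 + M0)). intros N HN. rewrite Herr. unfold err.
  replace N with (J0 + (N - J0))%nat at 1 by lia. rewrite sm_split.
  eapply Rle_lt_trans. apply Cmod_triangle.
  assert (P1 : (Cmod (sm (fun J => (taC q a alpha J * Ew q a (S J) (N - S J))%C) J0) <= S0 * (eps / (2 * (S0 + 1))))%R).
  { eapply Rle_trans. apply Cmod_sm. unfold S0. rewrite Rmult_comm, <- rsm_scal.
    apply rsm_le. intros J HJ. rewrite Cmod_mult. fold (at_ J).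
    match goal with |- (_ <= ?c * at_ J)%R => rewrite (Rmult_comm c) end.
    apply Rmult_le_compat_l; auto. left. apply HM0; lia. }
  assert (P2 : (Cmod (sm (fun i => (taC q a alpha (J0 + i)%nat * Ew q a (S (J0 + i)) (N - S (J0 + i)))%C) (N - J0))
                 <= Kb * (rsm at_ N - S0))%R).
  { eapply Rle_trans. apply Cmod_sm.
    replace (rsm at_ N - S0)%R with (rsm (fun i => at_ (J0 + i)%nat) (N - J0)).
    2:{ unfold S0. replace N with (J0 + (N - J0))%nat at 2 by lia. rewrite rsm_split. ring. }
    rewrite <- rsm_scal. apply rsm_le. intros i _. rewrite Cmod_mult. fold (at_ (J0 + i)%nat).
    rewrite (Rmult_comm Kb). apply Rmult_le_compat_l; auto. }
  assert (P3 : (rsm at_ N - S0 < eps / (2 * (Kb + 1)))%R).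
  { assert (A := HJ0 N ltac:(lia)). assert (B := HJ0 J0 ltac:(lia)). fold at_ in A, B. fold S0 in B.
    apply Rabs_def2 in A. apply Rabs_def2 in B.
    assert (eps / (4 * (Kb + 1)) + eps / (4 * (Kb + 1)) = eps / (2 * (Kb + 1)))%R by (field; lra). lra. }
  assert (P4 : (S0 * (eps / (2 * (S0 + 1))) <= eps / 2)%R).
  { apply Rle_trans with ((S0 + 1) * (eps / (2 * (S0 + 1))))%R.
    apply Rmult_le_compat_r. apply Rdiv_le_0_compat; lra. lra. right; field; lra. }
  assert (P5 : (Kb * (rsm at_ N - S0) < eps / 2)%R).
  { assert (0 <= rsm at_ N - S0)%R.
    { unfold S0. replace N with (J0 + (N - J0))%nat by lia. rewrite rsm_split.
      assert (0 <= rsm (fun i => at_ (J0 + i)%nat) (N - J0))%R by (apply rsm_nonneg; auto). lra. }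
    apply Rle_lt_trans with ((Kb + 1) * (rsm at_ N - S0))%R. nra.
    apply Rlt_le_trans with ((Kb + 1) * (eps / (2 * (Kb + 1))))%R.
    apply Rmult_lt_compat_l; lra. right; field; lra. }
  lra.
Qed.

Definition phi (z : Defs.Cx) : C := (Defs.Re z, Defs.Im z).

Lemma phi_add z w : phi (Defs.Cadd z w) = phi z + phi w.
Proof. reflexivity. Qed.
Lemma phi_opp z : phi (Defs.Copp z) = - phi z.
Proof. reflexivity. Qed.
Lemma phi_sub z w : phi (Defs.Csub z w) = phi z - phi w.
Proof. reflexivity. Qed.
Lemma phi_mul z w : phi (Defs.Cmul z w) = phi z * phi w.
Proof. reflexivity. Qed.
Lemma phi_one : phi Defs.Cone = 1.
Proof. reflexivity. Qed.
Lemma phi_inv z : phi (Defs.Cinv z) = / phi z.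
Proof. unfold phi, Defs.Cinv, Cinv. simpl. f_equal; f_equal; f_equal; ring. Qed.
Lemma phi_div z w : phi (Defs.Cdiv z w) = phi z / phi w.
Proof. unfold Defs.Cdiv. rewrite phi_mul, phi_inv. reflexivity. Qed.
Lemma phi_pow z n : phi (Defs.Cpow z n) = phi z ^ n.
Proof. induction n. reflexivity. simpl Defs.Cpow. rewrite phi_mul, IHn, Cpow_S. ring. Qed.
Lemma phi_qpoch x q n : phi (Defs.qpoch x q n) = qp (phi q) (phi x) n.
Proof. induction n. reflexivity. simpl Defs.qpoch. rewrite phi_mul, IHn, phi_sub, phi_one, phi_mul, phi_pow. reflexivity. Qed.
Lemma phi_sum f n : phi (Defs.Csum_upto f n) = sm (fun k => phi (f k)) (S n).
Proof. induction n. simpl sm. simpl Defs.Csum_upto. ring. simpl Defs.Csum_upto. rewrite phi_add, IHn. reflexivity. Qed.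
Lemma Cnorm_phi z : Defs.Cnorm z = Cmod (phi z).
Proof. unfold Defs.Cnorm, Cmod, phi. simpl. f_equal. ring. Qed.

Lemma fst_sm (g : nat -> C) n : fst (sm g n) = rsm (fun k => fst (g k)) n.
Proof. induction n. reflexivity. simpl. rewrite IHn. reflexivity. Qed.
Lemma snd_sm (g : nat -> C) n : snd (sm g n) = rsm (fun k => snd (g k)) n.
Proof. induction n. reflexivity. simpl. rewrite IHn. reflexivity. Qed.
Lemma sum_rsm g n : sum_f_R0 g n = rsm g (S n).
Proof. induction n. simpl. ring. simpl sum_f_R0. rewrite IHn. reflexivity. Qed.

Lemma sqrt2_lt2 : (sqrt 2 < 2)%R.
Proof.
  rewrite <- (sqrt_square 2) at 2 by lra. apply sqrt_lt_1_alt. lra.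
Qed.

Lemma cv_unshift u l : cv (fun N => u (S N)) l -> cv u l.
Proof. intros H eps He. destruct (H eps He) as [N HN]. exists (S N). intros n Hn.
  destruct n. lia. apply HN. lia. Qed.
Lemma cv_shift u l : cv u l -> cv (fun N => u (S N)) l.
Proof. intros H eps He. destruct (H eps He) as [N HN]. exists N. intros n Hn. apply HN. lia. Qed.
Lemma cv_ext u v l : (forall n, u n = v n) -> cv u l -> cv v l.
Proof. intros E H eps He. destruct (H eps He) as [N HN]. exists N. intros n Hn. rewrite <- E. auto. Qed.

Lemma series_in (f : nat -> Defs.Cx) L : Defs.Cseries1 f L ->
  cv (sm (fun k => phi (f (S k)))) (phi L).
Proof.
  intros [H1 H2]. apply cv_unshift. intros eps He.
  destruct (H1 (eps / 2)%R ltac:(lra)) as [N1 HN1]. destruct (H2 (eps / 2)%R ltac:(lra)) as [N2 HN2].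
  exists (N1 + N2)%nat. intros n Hn. specialize (HN1 n ltac:(lia)). specialize (HN2 n ltac:(lia)).
  unfold Rdist in *. rewrite sum_rsm in HN1, HN2.
  eapply Rle_lt_trans. apply Cmod_2Rmax.
  assert (Rmax (Rabs (fst ((sm (fun k => phi (f (S k))) (S n) - phi L)%C)))
               (Rabs (snd ((sm (fun k => phi (f (S k))) (S n) - phi L)%C))) < eps / 2)%R.
  { apply Rmax_lub_lt.
    - simpl. rewrite fst_sm. exact HN1.
    - simpl. rewrite snd_sm. exact HN2. }
  assert (0 <= Rmax (Rabs (fst ((sm (fun k => phi (f (S k))) (S n) - phi L)%C)))
               (Rabs (snd ((sm (fun k => phi (f (S k))) (S n) - phi L)%C))))%R.
  { eapply Rle_trans. apply Rabs_pos. apply Rmax_l. }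
  assert (H3 := sqrt2_lt2). assert (0 <= sqrt 2)%R by apply sqrt_pos. nra.
Qed.

Lemma series_out (f : nat -> Defs.Cx) L :
  cv (sm (fun k => phi (f (S k)))) (phi L) -> Defs.Cseries1 f L.
Proof.
  intros H. apply cv_shift in H. split; intros eps He; destruct (H eps He) as [N HN];
  exists N; intros n Hn; specialize (HN n Hn); unfold Rdist; rewrite sum_rsm;
  eapply Rle_lt_trans; try exact HN.
  - assert (E := re_le_Cmod (sm (fun k => phi (f (S k))) (S n) - phi L)). unfold Re in E. simpl in E.
    rewrite fst_sm in E. exact E.
  - assert (E := Rmax_Cmod (sm (fun k => phi (f (S k))) (S n) - phi L)).
    eapply Rle_trans; [|exact E]. eapply Rle_trans; [|apply Rmax_r]. simpl. rewrite snd_sm. apply Rle_refl.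
Qed.

Lemma tri_div n : (n * (n + 1) / 2)%nat = tri n.
Proof.
  assert (E : (n * (n + 1) = tri n * 2)%nat).
  { induction n. reflexivity. simpl tri. nia. }
  rewrite E. apply Nat.div_mul. lia.
Qed.

Local Close Scope C_scope.

Lemma main_core (a q : Defs.Cx) (alpha beta : nat -> Defs.Cx) :
  Defs.Cnorm q < 1 ->
  Defs.Cnorm (Defs.Cmul a q) < 1 ->
  (forall n : nat, Defs.Cmul a (Defs.Cpow q (S n)) <> Defs.Cone) ->
  bailey_pair a q alpha beta ->
  let tb := fun n : nat =>
    Defs.Cmul (Defs.Cmul (qpoch q q (n - 1)) (Defs.Cpow (Defs.Copp a) n))
         (Defs.Cmul (Defs.Cpow q (n * (n + 1) / 2)) (beta n)) in
  let ta := fun n : nat =>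
    Defs.Cmul (Defs.Cdiv (Defs.Cmul (qpoch q q (n - 1)) (Defs.Cmul (Defs.Cpow (Defs.Copp a) n) (Defs.Cpow q (n * (n + 1) / 2))))
               (qpoch (Defs.Cmul q a) q n))
         (alpha n) in
  Cabs_conv1 tb ->
  Cabs_conv1 ta ->
  forall Sb Sa : Defs.Cx,
  Cseries1 tb Sb ->
  Cseries1 ta Sa ->
  let L := Defs.Csub Sb Sa in
  Cseries1 (fun n => Defs.Copp (Defs.Cdiv (Defs.Cmul (Defs.Cmul (Defs.Csub Defs.Cone (Defs.Cmul a (Defs.Cpow q (2 * n)))) (Defs.Cpow q (n * n)))
                                      (Defs.Cpow a n))
                                (Defs.Cmul (Defs.Csub Defs.Cone (Defs.Cmul a (Defs.Cpow q n))) (Defs.Csub Defs.Cone (Defs.Cpow q n))))) L /\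
  Cseries1 (fun n => Defs.Cdiv (Defs.Cmul (Defs.Cpow q (n * (n + 1) / 2)) (Defs.Cpow (Defs.Copp a) n))
                          (Defs.Cmul (qpoch (Defs.Cmul q a) q n) (Defs.Csub Defs.Cone (Defs.Cpow q n)))) L /\
  Cseries1 (fun n => Defs.Copp (Defs.Cdiv (Defs.Cmul a (Defs.Cpow q n)) (Defs.Csub Defs.Cone (Defs.Cmul a (Defs.Cpow q n))))) L.
Proof.
  intros Hq Haq _ [H0 [_ Hb]] tb ta _ [sg Hsg] Sb Sa HSb HSa L.
  rewrite Cnorm_phi in Hq. rewrite Cnorm_phi, phi_mul, Cmult_comm in Haq.
  set (alpha' := fun n => phi (alpha n)). set (beta' := fun n => phi (beta n)).
  assert (H0' : alpha' O = 1%C) by (unfold alpha'; rewrite H0; reflexivity).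
  assert (Hb' : forall n, (0 < n)%nat -> beta' n =
     sm (fun j => (alpha' j / (qp (phi q) (phi q) (n - j) * qp (phi q) (phi a * phi q) (n + j)))%C) (S n)).
  { intros n Hn. unfold beta'. rewrite Hb by auto. rewrite phi_sum. apply sm_ext. intros j _.
    rewrite phi_div, phi_mul, !phi_qpoch, phi_mul. reflexivity. }
  assert (Eta : forall k, phi (ta (S k)) = taC (phi q) (phi a) alpha' k).
  { intros k. unfold ta, taC. simpl (S k - 1)%nat. rewrite Nat.sub_0_r, tri_div.
    rewrite phi_mul, phi_div, !phi_mul, !phi_qpoch, !phi_pow, phi_mul, phi_opp. reflexivity. }
  assert (Etb : forall k, phi (tb (S k)) = tbC (phi q) (phi a) beta' k).
  { intros k. unfold tb, tbC. simpl (S k - 1)%nat. rewrite Nat.sub_0_r, tri_div.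
    rewrite !phi_mul, !phi_qpoch, !phi_pow, phi_opp. reflexivity. }
  assert (Hcb : cv (sm (tbC (phi q) (phi a) beta')) (phi Sb)).
  { apply (cv_ext (sm (fun k => phi (tb (S k))))). intros n; apply sm_ext; intros; apply Etb.
    apply series_in; auto. }
  assert (Hca : cv (sm (taC (phi q) (phi a) alpha')) (phi Sa)).
  { apply (cv_ext (sm (fun k => phi (ta (S k))))). intros n; apply sm_ext; intros; apply Eta.
    apply series_in; auto. }
  assert (Habs : exists sg, forall eps, 0 < eps -> exists N, forall n, (N <= n)%nat ->
      Rabs (rsm (fun k => Cmod (taC (phi q) (phi a) alpha' k)) n - sg) < eps).
  { exists sg. intros eps He. destruct (Hsg eps He) as [N HN]. exists (S N). intros n Hn.
    destruct n as [|m]; [lia|]. specialize (HN m ltac:(lia)). unfold Rdist in HN.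
    rewrite sum_rsm in HN. erewrite rsm_ext. exact HN. intros i _. simpl. rewrite Cnorm_phi, Eta. reflexivity. }
  assert (HA := partA (phi q) (phi a) alpha' beta' (phi Sb) (phi Sa) Hq Haq H0' Hb' Habs Hcb Hca).
  assert (HT := partB_third (phi q) (phi a) _ Hq Haq HA).
  assert (HF := partB_first (phi q) (phi a) _ Hq Haq HT).
  assert (EL : phi L = (phi Sb - phi Sa)%C) by (unfold L; apply phi_sub).
  split; [|split]; apply series_out; rewrite EL.
  - eapply cv_ext; [|exact HF]. intros n. unfold NGf. apply sm_ext. intros k _.
    rewrite phi_opp, phi_div, !phi_mul, !phi_sub, phi_one, !phi_mul, !phi_pow. reflexivity.
  - eapply cv_ext; [|exact HA]. intros n. unfold Hs. apply sm_ext. intros k _.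
    rewrite phi_div, !phi_mul, phi_qpoch, phi_sub, phi_one, !phi_pow, phi_mul, phi_opp, tri_div. reflexivity.
  - eapply cv_ext; [|exact HT]. intros n. unfold Th. apply sm_ext. intros k _.
    rewrite phi_opp, phi_div, phi_sub, phi_one, !phi_mul, !phi_pow. reflexivity.
Qed.
End Core.


Theorem corollary3p2 (a q : Cx) (alpha beta : nat -> Cx) :
  Cnorm q < 1 ->
  Cnorm (Cmul a q) < 1 ->
  (* no denominator vanishes: (aq;q)_n <> 0 for all n, i.e. a q^(n+1) <> 1 *)
  (forall n : nat, Cmul a (Cpow q (S n)) <> Cone) ->
  bailey_pair a q alpha beta ->
  let tb := fun n : nat =>
    Cmul (Cmul (qpoch q q (n - 1)) (Cpow (Copp a) n))
         (Cmul (Cpow q (n * (n + 1) / 2)) (beta n)) in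
  let ta := fun n : nat =>
    Cmul (Cdiv (Cmul (qpoch q q (n - 1)) (Cmul (Cpow (Copp a) n) (Cpow q (n * (n + 1) / 2))))
               (qpoch (Cmul q a) q n))
         (alpha n) in
  Cabs_conv1 tb ->
  Cabs_conv1 ta ->
  forall Sb Sa : Cx,
  Cseries1 tb Sb ->
  Cseries1 ta Sa ->
  let L := Csub Sb Sa in
  Cseries1 (fun n => Copp (Cdiv (Cmul (Cmul (Csub Cone (Cmul a (Cpow q (2 * n)))) (Cpow q (n * n)))
                                      (Cpow a n))
                                (Cmul (Csub Cone (Cmul a (Cpow q n))) (Csub Cone (Cpow q n))))) L /\
  Cseries1 (fun n => Cdiv (Cmul (Cpow q (n * (n + 1) / 2)) (Cpow (Copp a) n))
                          (Cmul (qpoch (Cmul q a) q n) (Csub Cone (Cpow q n)))) L /\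
  Cseries1 (fun n => Copp (Cdiv (Cmul a (Cpow q n)) (Csub Cone (Cmul a (Cpow q n))))) L.
Proof.
  exact (Core.main_core a q alpha beta).
Qed.
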